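(* Let $q$ be a prime power, $n\ge 1$, and let $M$ be an $n\times n$ matrix with entries in $\mathbb{F}_{q^2}$ which is not of the form $c\,\mathbb{I}_{n\times n}$ for any $c\in\mathbb{F}_{q^2}$. Then $\sharp(\mathrm{Num}_0(M))\ge \lceil (q+1)/2\rceil$.
   Context: For $u=(u_1,\dots,u_n),v=(v_1,\dots,v_n)\in\mathbb{F}_{q^2}^n$ set $\langle u,v\rangle=\sum_{i=1}^n u_i^q v_i$ (the standard Hermitian form; note $\langle u,u\rangle\in\mathbb{F}_q$). For an $n\times n$ matrix $M$ over $\mathbb{F}_{q^2}$, $\mathrm{Num}_0(M)=\{\langle u,Mu\rangle : u\in\mathbb{F}_{q^2}^n,\ \langle u,u\rangle=0\}\subseteq\mathbb{F}_{q^2}$. $\mathbb{I}_{n\times n}$ is the identity matrix. *)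

(* Defs.v *)
From HB Require Import structures.
From mathcomp Require Import all_boot all_order all_algebra all_field.
Set Implicit Arguments. Unset Strict Implicit. Unset Printing Implicit Defensive.
Import GRing.Theory.
Local Open Scope ring_scope.

(* F plays the role of F_{q^2}; the Frobenius x |-> x^q is the conjugation. *)

Definition herm (F : finFieldType) (q n : nat) (u v : 'cV[F]_n) : F :=
  \sum_(i < n) (u i 0) ^+ q * v i 0.

Definition Num0 (F : finFieldType) (q n : nat) (M : 'M[F]_n) : {set F} :=
  [set herm q u (M *m u) | u in [pred u : 'cV[F]_n | herm q u u == 0]].

(* Main.v *)
Require Import Defs.
From HB Require Import structures.
From mathcomp Require Import all_boot all_order all_algebra all_field all_solvable zify ring.
Import GRing.Theory.
Local Open Scope ring_scope.

Lemma quad3 (F : fieldType) (a b c t1 t2 t3 : F) :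
  t1 != t2 -> t1 != t3 -> t2 != t3 ->
  a * t1 ^+ 2 + b * t1 + c = 0 -> a * t2 ^+ 2 + b * t2 + c = 0 ->
  a * t3 ^+ 2 + b * t3 + c = 0 -> [/\ a = 0, b = 0 & c = 0].
Proof.
move=> n12 n13 n23 e1 e2 e3.
have h12 : a * (t1 + t2) + b = 0.
  have : (t1 - t2) * (a * (t1 + t2) + b) = 0.
    by rewrite -[RHS](subrr 0) -{1}e1 -e2; ring.
  by move/eqP; rewrite mulf_eq0 subr_eq0 (negbTE n12) /= => /eqP.
have h13 : a * (t1 + t3) + b = 0.
  have : (t1 - t3) * (a * (t1 + t3) + b) = 0.
    by rewrite -[RHS](subrr 0) -{1}e1 -e3; ring.
  by move/eqP; rewrite mulf_eq0 subr_eq0 (negbTE n13) /= => /eqP.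
have ha : a = 0.
  have : (t2 - t3) * a = 0 by rewrite -[RHS](subrr 0) -{1}h12 -h13; ring.
  by move/eqP; rewrite mulf_eq0 subr_eq0 (negbTE n23) /= => /eqP.
have hb : b = 0 by move: h12; rewrite ha mul0r add0r.
split=> //; by move: e1; rewrite ha hb !mul0r !add0r.
Qed.

Lemma sum2 (F : zmodType) n (g : 'I_n -> F) i j : i != j ->
  (forall k, k != i -> k != j -> g k = 0) -> \sum_k g k = g i + g j.
Proof.
move=> nij H; rewrite (bigD1 i) // (bigD1 j) 1?eq_sym //= big1 ?addr0 // => k /andP[ki kj].
exact: H.
Qed.

Lemma herm_scale (F : finFieldType) q n (c : F) (u v : 'cV[F]_n) :
  herm q (c *: u) (c *: v) = c ^+ q * c * herm q u v.
Proof.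
rewrite /herm mulr_sumr; apply: eq_bigr => i _; rewrite !mxE exprMn; ring.
Qed.

Lemma iso_vec (F : finFieldType) q n (M : 'M[F]_n) (i j : 'I_n) (t : F) :
  (0 < q)%N -> i != j ->
  let u := \col_k (if k == i then 1 else if k == j then t else 0) in
  herm q u u = 1 + t ^+ q * t /\
  herm q u (M *m u) = (M i i + M i j * t) + t ^+ q * (M j i + M j j * t).
Proof.
move=> q0 nij u.
have uE k : u k 0 = (if k == i then 1 else if k == j then t else 0) by rewrite mxE.
have ui : u i 0 = 1 by rewrite uE eqxx.
have uj : u j 0 = t by rewrite uE eq_sym (negbTE nij) eqxx.
have hv (v : 'cV[F]_n) : herm q u v = u i 0 ^+ q * v i 0 + u j 0 ^+ q * v j 0.
  rewrite /herm (@sum2 _ _ _ _ _ nij) // => k ki kj.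
  by rewrite uE (negbTE ki) (negbTE kj) expr0n -(prednK q0) /= mul0r.
have Mu k : (M *m u) k 0 = M k i + M k j * t.
  rewrite mxE (@sum2 _ _ _ _ _ nij) ?ui ?uj ?mulr1 // => l li lj.
  by rewrite uE (negbTE li) (negbTE lj) mulr0.
split; first by rewrite hv ui uj expr1n mul1r.
by rewrite hv !Mu ui uj expr1n mul1r.
Qed.

Theorem corollary1 (F : finFieldType) (q : nat)
  (hq : exists p k : nat, [/\ prime p, (0 < k)%N & q = (p ^ k)%N])
  (hF : #|F| = (q ^ 2)%N)
  (n : nat) (hn : (0 < n)%N) (M : 'M[F]_n)
  (hM : ~ exists c : F, M = c%:M) :
  ((q.+2) %/ 2 <= #|Num0 q M|)%N.
Proof.
have q2 : (2 <= q)%N.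
  case: hq => p [k [pp k0 ->]].
  apply: leq_trans (prime_gt1 pp) _.
  by rewrite -{1}(expn1 p) leq_pexp2l // prime_gt0.
have q0 : (0 < q)%N by lia.
set N := (q ^ 2).-1.
have Nq : N = (q.-1 * q.+1)%N by rewrite /N; nia.
have N0 : (0 < N)%N by rewrite Nq; nia.
have cardF : #|F| = N.+1 by rewrite hF /N prednK // expn_gt0 q0.
have unity (x : F) : x != 0 -> x ^+ N = 1.
  move=> x0; have := expf_card x; rewrite cardF exprSr => /eqP.
  by rewrite -subr_eq0 -{3}(mul1r x) -mulrBl mulf_eq0 (negbTE x0) orbF subr_eq0 => /eqP.
have [z _ zP] : exists2 z, z \in enum [pred x : F | x != 0] & N.-primitive_root z.
  apply/hasP; apply: has_prim_root => //.
  - by apply/allP => x; rewrite mem_enum inE => x0; rewrite unity_rootE unity.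
  - exact: enum_uniq.
  - by rewrite -cardE cardC1 cardF.
have z0 : z != 0.
  apply/eqP => ez; have := prim_expr_order zP; rewrite ez expr0n.
  by rewrite (negbTE (lt0n_neq0 N0)) => /eqP; rewrite eq_sym oner_eq0.
have zinj i j : (i < N)%N -> (j < N)%N -> z ^+ i = z ^+ j -> i = j.
  by move=> iN jN /eqP; rewrite (eq_prim_root_expr zP) !modn_small // => /eqP.
have [t0 [t00 t0E]] : exists t0 : F, t0 != 0 /\ t0 ^+ q.+1 = -1.
  case: (boolP (odd q)) => qo.
  - have := odd_double_half q; rewrite qo -mul2n => qE.
    set m := q./2 in qE.
    exists (z ^+ m); split; first by rewrite expf_neq0.
    set w := z ^+ m ^+ q.+1.
    have w2 : w ^+ 2 = 1.
      rewrite /w -!exprM -(prim_expr_order zP); congr (_ ^+ _); rewrite Nq; nia.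
    have w1 : w != 1.
      rewrite /w -exprM -(expr0 z) (eq_prim_root_expr zP) mod0n modn_small; nia.
    have : (w - 1) * (w + 1) == 0 by rewrite mulrDr mulr1 mulrBl mul1r -expr2 w2; apply/eqP; ring.
    rewrite mulf_eq0 subr_eq0 (negbTE w1) /= => /eqP h.
    by apply/eqP; rewrite -subr_eq0 opprK h.
  - have m1 : (-1 : F) = 1.
      have oN : odd N.
        have h : odd (q ^ 2) = odd N.+1 by rewrite -cardF hF.
        by move: h; rewrite oddX (negbTE qo) /=; case: (odd N).
      have := unity (-1) ; rewrite oppr_eq0 oner_eq0 -signr_odd oN expr1 => h; exact: h.
    by exists 1; rewrite expr1n m1 oner_eq0.
have [u [uiso a0]] : exists u : 'cV[F]_n, herm q u u = 0 /\ herm q u (M *m u) != 0.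
  case: (pickP [pred u : 'cV[F]_n | (herm q u u == 0) && (herm q u (M *m u) != 0)]) => [u /andP[/eqP h1 h2]|H].
    by exists u.
  exfalso; apply: hM.
  have Hz u : herm q u u = 0 -> herm q u (M *m u) = 0.
    move=> h1; move: (H u) => /= /negbT; rewrite negb_and negbK h1 eqxx /=.
    by move/eqP.
  have offd i j : i != j -> M i j = 0 /\ M i i = M j j.
    move=> nij.
    pose ts k := t0 * z ^+ (q.-1 * k).
    have tsE k : ts k ^+ q.+1 = -1.
      rewrite /ts exprMn t0E -exprM.
      have -> : (q.-1 * k * q.+1 = N * k)%N by rewrite Nq; nia.
      rewrite exprM (prim_expr_order zP).
      by rewrite expr1n mulr1.
    have root k : M i j * ts k ^+ 2 + (M i i - M j j) * ts k + (- M j i) = 0.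
      have [h1 h2] := iso_vec _ q _ M i j (ts k) q0 nij.
      have e : ts k ^+ q * ts k = -1 by rewrite -exprSr tsE.
      transitivity (ts k * ((M i i + M i j * ts k) + ts k ^+ q * (M j i + M j j * ts k))).
        have -> : ts k * ((M i i + M i j * ts k) + ts k ^+ q * (M j i + M j j * ts k)) =
           ts k * (M i i + M i j * ts k) + (ts k ^+ q * ts k) * (M j i + M j j * ts k) by ring.
        rewrite e; ring.
      by rewrite -h2 Hz ?mulr0 // h1 e subrr.
    have tsinj a b : (a < 3)%N -> (b < 3)%N -> ts a = ts b -> a = b.
      move=> a3 b3 /(mulfI t00) /zinj.
      have lt a' : (a' < 3)%N -> (q.-1 * a' < N)%N by move=> ?; rewrite Nq; nia.
      move=> /(_ (lt _ a3) (lt _ b3)) /eqP; rewrite eqn_pmul2l; last by lia.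
      by move/eqP.
    have d a b : (a < 3)%N -> (b < 3)%N -> a != b -> ts a != ts b.
      by move=> a3 b3 nab; apply/eqP => /(tsinj _ _ a3 b3) /eqP; rewrite (negbTE nab).
    have [c1 c2 c3] := @quad3 _ _ _ _ _ _ _ (d 0 1 isT isT isT)%N (d 0 2 isT isT isT)%N (d 1 2 isT isT isT)%N (root 0%N) (root 1%N) (root 2%N).
    split=> //; first by move/eqP: c2; rewrite subr_eq0 => /eqP.
  pose i0 : 'I_n := Ordinal hn.
  exists (M i0 i0); apply/matrixP => i j; rewrite mxE.
  case: (eqVneq i j) => [<-|nij]; last by rewrite mulr0n; case: (offd _ _ nij).
  rewrite mulr1n; case: (eqVneq i0 i) => [->//|ni].
  by case: (offd _ _ ni).
pose f := fun j : 'I_(q.-1) => z ^+ (q.+1 * j) * herm q u (M *m u).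
have finj : injective f.
  move=> j1 j2 /(mulIf a0) /zinj.
  have lt (j' : 'I_(q.-1)) : (q.+1 * j' < N)%N by rewrite Nq; have := ltn_ord j'; nia.
  move=> /(_ (lt j1) (lt j2)) /eqP; rewrite eqn_pmul2l // => /eqP.
  exact: val_inj.
have sub : 0 |: [set f j | j in 'I_(q.-1)] \subset Num0 q M.
  apply/subsetP => x; rewrite !inE => /orP [/eqP -> | /imsetP [j _ ->]].
    apply/imsetP; exists 0; rewrite ?inE /herm ?mulmx0.
      by apply/eqP; apply: big1 => i _; rewrite mxE mulr0.
    by apply/esym; apply: big1 => i _; rewrite mxE mulr0.
  apply/imsetP; exists (z ^+ j *: u); rewrite ?inE.
    by rewrite herm_scale uiso mulr0.
  rewrite -scalemxAr herm_scale /f -exprSr -exprM mulnC.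
  done.
have := subset_leq_card sub.
rewrite cardsU1 card_imset // card_ord.
have -> : (0 \notin [set f j | j in 'I_(q.-1)]).
  apply/imsetP => [[j _]] /esym/eqP; rewrite mulf_eq0 expf_eq0 (negbTE z0) (negbTE a0) andbF.
  done.
move=> h; apply: leq_trans h; rewrite add1n prednK //.
by rewrite -ltnS ltn_divLR //; lia.
Qed.
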